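(* Let $\mathcal{Q}\subseteq\mathbb{R}^n$ and consider the fully actuated robotic system $\mathbf{D}(\mathbf{q})\ddot{\mathbf{q}}+\mathbf{C}(\mathbf{q},\dot{\mathbf{q}})\dot{\mathbf{q}}+\mathbf{G}(\mathbf{q})=\mathbf{B}\mathbf{u}$ with $\mathbf{u}\in\mathbb{R}^m$, $m=n$ and $\mathbf{B}$ invertible. Let $h_0:\mathcal{Q}\to\mathbb{R}$ be continuously differentiable and suppose there exist a continuously differentiable $\mathbf{k}_0:\mathcal{Q}\to\mathbb{R}^n$ and an extended class $\mathcal{K}_\infty$ function $\alpha$ with $\nabla h_0(\mathbf{q})\cdot\mathbf{k}_0(\mathbf{q})>-\alpha(h_0(\mathbf{q}))$ for all $\mathbf{q}\in\mathcal{Q}$. For $\mu>0$ let $$h(\mathbf{q},\dot{\mathbf{q}})=h_0(\mathbf{q})-\frac{1}{2\mu}(\dot{\mathbf{q}}-\mathbf{k}_0(\mathbf{q}))^\top\mathbf{D}(\mathbf{q})(\dot{\mathbf{q}}-\mathbf{k}_0(\mathbf{q})),\qquad \mathcal{C}=\{(\mathbf{q},\dot{\mathbf{q}})\in T\mathcal{Q}:h(\mathbf{q},\dot{\mathbf{q}})\ge0\}.$$ Then $h$ is an energy-based control barrier function for the robotic system on $\mathcal{C}$.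
   Context: $\mathbf{D}(\mathbf{q})$ is the positive definite inertia matrix, $\mathbf{C}$ the Coriolis matrix, $\mathbf{G}$ the gravity term, $\mathbf{B}$ the actuation matrix. An extended class $\mathcal{K}_\infty$ function is a continuous, strictly increasing $\alpha:\mathbb{R}\to\mathbb{R}$ with $\alpha(0)=0$ and $\alpha(s)\to\pm\infty$ as $s\to\pm\infty$. Energy-based CBF: the function $h$ above (with $\mathbf{k}_0$ continuously differentiable) defining $\mathcal{C}$ is an energy-based control barrier function for the robotic system on $\mathcal{C}$ if there exists an extended class $\mathcal{K}_\infty$ function $\alpha$ such that for all $(\mathbf{q},\dot{\mathbf{q}})\in T\mathcal{Q}$, $$\sup_{\mathbf{u}\in\mathbb{R}^m}\Big\{\tfrac{1}{\mu}(\dot{\mathbf{q}}-\mathbf{k}_0(\mathbf{q}))^\top\Big[\mathbf{D}(\mathbf{q})\tfrac{\partial\mathbf{k}_0}{\partial\mathbf{q}}(\mathbf{q})\dot{\mathbf{q}}+\mathbf{C}(\mathbf{q},\dot{\mathbf{q}})\mathbf{k}_0(\mathbf{q})+\mathbf{G}(\mathbf{q})-\mathbf{B}\mathbf{u}\Big]+\nabla h_0(\mathbf{q})\cdot\dot{\mathbf{q}}\Big\}>-\alpha(h(\mathbf{q},\dot{\mathbf{q}})).$$ *)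

(* Defs.v *)
From HB Require Import structures.
From mathcomp Require Import all_boot all_order all_algebra.
From mathcomp Require Import all_classical all_reals all_analysis.
Set Implicit Arguments. Unset Strict Implicit. Unset Printing Implicit Defensive.
Import Order.TTheory GRing.Theory Num.Theory.
Import numFieldNormedType.Exports.
Local Open Scope classical_set_scope.
Local Open Scope ring_scope.

Section Defs.
Variable R : realType.

Definition ext_classKinf (alpha : R -> R) : Prop :=
  [/\ continuous alpha,
      {homo alpha : x y / x < y},
      alpha 0 = 0,
      alpha x @[x --> +oo] --> +oo &
      alpha x @[x --> -oo] --> -oo].

Definition C1_on {V W : normedModType R} (Q : set V) (f : V -> W) : Prop :=
  (forall q, Q q -> differentiable f q) /\
  (forall v : V, {within Q, continuous (fun q => 'D_v f q)}).

Definition posdef {n : nat} (M : 'M[R]_n) : Prop :=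
  M^T = M /\ forall x : 'cV[R]_n, x != 0 -> 0 < (x^T *m M *m x) 0 0.

Variables (n m : nat).

Definition energy_h (D : 'cV[R]_n -> 'M[R]_n) (h0 : 'cV[R]_n -> R)
  (k0 : 'cV[R]_n -> 'cV[R]_n) (mu : R) (q qd : 'cV[R]_n) : R :=
  h0 q - (2 * mu)^-1 * ((qd - k0 q)^T *m D q *m (qd - k0 q)) 0 0.

(* safe set C = {(q,qd) in TQ | h(q,qd) >= 0}, with TQ = Q x R^n *)
Definition energy_safe_set (Q : set 'cV[R]_n) (D : 'cV[R]_n -> 'M[R]_n)
  (h0 : 'cV[R]_n -> R) (k0 : 'cV[R]_n -> 'cV[R]_n) (mu : R)
  : set ('cV[R]_n * 'cV[R]_n) :=
  [set x | Q x.1 /\ 0 <= energy_h D h0 k0 mu x.1 x.2].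

Definition ecbf_expr (D : 'cV[R]_n -> 'M[R]_n)
  (C : 'cV[R]_n -> 'cV[R]_n -> 'M[R]_n) (G : 'cV[R]_n -> 'cV[R]_n)
  (B : 'M[R]_(n, m)) (h0 : 'cV[R]_n -> R) (k0 : 'cV[R]_n -> 'cV[R]_n)
  (mu : R) (q qd : 'cV[R]_n) (u : 'cV[R]_m) : R :=
  mu^-1 * ((qd - k0 q)^T *m
      (D q *m ('D_qd k0 q) + C q qd *m k0 q + G q - B *m u)) 0 0
  + 'D_qd h0 q.

(* energy-based control barrier function for the robotic system
   D(q) qdd + C(q,qd) qd + G(q) = B u on the set C defined by h *)
Definition energy_CBF (Q : set 'cV[R]_n) (D : 'cV[R]_n -> 'M[R]_n)
  (C : 'cV[R]_n -> 'cV[R]_n -> 'M[R]_n) (G : 'cV[R]_n -> 'cV[R]_n)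
  (B : 'M[R]_(n, m)) (h0 : 'cV[R]_n -> R) (k0 : 'cV[R]_n -> 'cV[R]_n)
  (mu : R) : Prop :=
  C1_on Q k0 /\
  exists alpha : R -> R, ext_classKinf alpha /\
    forall q qd : 'cV[R]_n, Q q ->
      ((- alpha (energy_h D h0 k0 mu q qd))%:E <
        ereal_sup [set (ecbf_expr D C G B h0 k0 mu q qd u)%:E | u in [set: 'cV[R]_m]])%E.

End Defs.

(* Main.v *)
Require Import Defs.
From HB Require Import structures.
From mathcomp Require Import all_boot all_order all_algebra.
From mathcomp Require Import all_classical all_reals all_analysis.
From mathcomp Require Import ring lra.
Import Order.TTheory GRing.Theory Num.Theory.
Import numFieldNormedType.Exports.
Local Open Scope classical_set_scope.
Local Open Scope ring_scope.

Lemma trmx_self_pos (R : realType) n (e : 'cV[R]_n) : e != 0 -> 0 < (e^T *m e) 0 0.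
Proof.
move=> en0; rewrite !mxE.
have h0 : forall i : 'I_n, true -> 0 <= e^T 0 i * e i 0.
  by move=> i _; rewrite mxE -expr2 sqr_ge0.
rewrite lt_def sumr_ge0 // andbT; apply/negP => /eqP /psumr_eq0P H.
move/eqP: en0; apply; apply/matrixP => i j; rewrite (ord1 j) mxE.
have := H h0 i isT; rewrite mxE => /eqP; rewrite mulf_eq0 orbb => /eqP //.
Qed.

Lemma fin_ineq (R : realFieldType) (a d mu s : R) : 0 < mu -> 0 < s ->
  - a < mu^-1 * (mu * (`|a| + `|d| + 1) / s * s) + d.
Proof.
move=> m0 s0.
have -> : mu^-1 * (mu * (`|a| + `|d| + 1) / s * s) = `|a| + `|d| + 1.
  by field; rewrite ?gt_eqF.
have := ler_norm (- a); have := ler_norm (- d); rewrite !normrN => h1 h2.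
have : - d <= `|d| by []. lra.
Qed.

Theorem lemma5 (R : realType) (n : nat) (Q : set 'cV[R]_n)
  (D : 'cV[R]_n -> 'M[R]_n) (C : 'cV[R]_n -> 'cV[R]_n -> 'M[R]_n)
  (G : 'cV[R]_n -> 'cV[R]_n) (B : 'M[R]_n)
  (h0 : 'cV[R]_n -> R) (k0 : 'cV[R]_n -> 'cV[R]_n) (alpha : R -> R) (mu : R) :
  (forall q, Q q -> posdef (D q)) ->
  B \in unitmx ->
  C1_on Q h0 ->
  C1_on Q k0 ->
  ext_classKinf alpha ->
  (forall q, Q q -> - alpha (h0 q) < 'D_(k0 q) h0 q) ->
  0 < mu ->
  energy_CBF Q D C G B h0 k0 mu.
Proof.
move=> _ Bu _ Ck0 Ka Hcond mu0.
split => //; exists alpha; split => // q qd Qq.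
set a := alpha _.
set v := D q *m ('D_qd k0 q) + C q qd *m k0 q + G q.
set d := 'D_qd h0 q.
have key : forall u, (- a < ecbf_expr D C G B h0 k0 mu q qd u) ->
    ((- a)%:E < ereal_sup [set (ecbf_expr D C G B h0 k0 mu q qd u)%:E | u in [set: 'cV[R]_n]])%E.
  move=> u Hu; apply: (lt_le_trans _ (ereal_sup_ubound _)); last by exists u.
  by rewrite lte_fin.
have [eq0|ne0] := eqVneq (qd - k0 q) 0.
  apply: (key 0); rewrite /ecbf_expr eq0 trmx0 !mul0mx mxE mulr0 add0r.
  rewrite /a /energy_h eq0 trmx0 !mul0mx mxE mulr0 subr0.
  have -> : qd = k0 q by apply/eqP; rewrite -subr_eq0 eq0.
  exact: Hcond.
set e := qd - k0 q.
set s := (e^T *m e) 0 0.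
have s0 : 0 < s by exact: trmx_self_pos.
set c := mu * (`|a| + `|d| + 1) / s.
apply: (key (invmx B *m (v - c *: e))).
rewrite /ecbf_expr -/e -/v -/d (mulKVmx Bu).
have -> : v - (v - c *: e) = c *: e by rewrite opprB addrC subrK.
rewrite -scalemxAr mxE -/s /c.
exact: fin_ineq.
Qed.
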